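(* Let $k\ge2$, $n>2^k$ and $c=2^k-2$. For every $v\in V\setminus\{1\}$ there exists a search strategy $T_v\in\mathcal{T}_k$ with $$C(T_v)=\begin{cases}[v\oplus(c+1)]&\text{if }\{0,n-1\}\cap[v\oplus(c+1)]\neq\emptyset,\\ [v\oplus c]&\text{otherwise.}\end{cases}$$
   Context: $G$ is the path graph with $V=\{0,\dots,n-1\}$ and edges $\{v,v+1\}$. A search strategy for a tree $H$ is a rooted binary tree defined recursively: a single node is a search strategy for any $H$; otherwise the root is labeled with an edge $uv$ of $H$ and its two child subtrees are search strategies for the components $H_u,H_v$ of $H-uv$ containing $u,v$. Nodes get vertex sets: the root gets $V(H)$, the children of a root labeled $uv$ get $V(H_u),V(H_v)$, recursively. $C(T)$ is the set of $v$ with $V(\lambda)=\{v\}$ for a leaf $\lambda$. $\mathcal{T}_k$ is the set of search strategies for $G$ of height at most $k$. $[u\oplus\ell]=\{w\bmod n: u\le w\le u+\ell-1\}$. *)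

(* Defs.v *)
From mathcomp Require Import all_boot.
Set Implicit Arguments. Unset Strict Implicit. Unset Printing Implicit Defensive.

(* Path graph G on V = {0,...,n-1}, edges {u,u+1}.  Every component arising
   from G by deleting edges is a subpath on an interval of vertices [a..b];
   we identify such a subtree H with the pair (a,b).  The edge {u,u+1} is
   recorded by its smaller endpoint u. *)

(* Rooted binary trees whose internal nodes are labelled by edges. *)
Inductive strat : Type :=
| Leaf : strat
| Node : nat -> strat -> strat -> strat.

(* [is_strat a b T]: T is a search strategy for the subpath on [a..b].
   A node labelled by edge {u,u+1} (a <= u < b) splits H into H_u = [a..u]
   and H_{u+1} = [u+1..b]. *)
Fixpoint is_strat (a b : nat) (T : strat) : bool :=
  match T with
  | Leaf => true
  | Node u l r => [&& a <= u, u < b, is_strat a u l & is_strat u.+1 b r]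
  end.

(* Height: a single node has height 0. *)
Fixpoint height (T : strat) : nat :=
  match T with
  | Leaf => 0
  | Node _ l r => (maxn (height l) (height r)).+1
  end.

(* C(T) for T a strategy of the subpath [a..b]: vertices v such that some
   leaf has vertex set {v}. *)
Fixpoint Cset (a b : nat) (T : strat) : seq nat :=
  match T with
  | Leaf => if a == b then [:: a] else [::]
  | Node u l r => Cset a u l ++ Cset u.+1 b r
  end.

(* T in T_k: search strategy for G (root vertex set V = [0..n-1]) of height <= k. *)
Definition in_Tk (n k : nat) (T : strat) : bool :=
  is_strat 0 n.-1 T && (height T <= k).

Definition circ (n u l : nat) : seq nat := [seq (u + i) %% n | i <- iota 0 l].

(* Main.v *)
Require Import Defs.
From mathcomp Require Import all_boot.
From mathcomp Require Import zify.

Fixpoint build (f : nat) (a b : nat) (s : seq nat) : strat :=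
  match f with
  | 0 => Leaf
  | f'.+1 =>
    if s is [::] then Leaf else
    let m := (size s)./2 in
    let u := nth 0 s m in
    Node u (build f' a u (take m s)) (build f' u.+1 b (drop m.+1 s))
  end.

Definition good a b s := pairwise ltn s && all (fun u => (a <= u) && (u < b)) s.

Lemma split_s (s : seq nat) m : m < size s ->
  s = take m s ++ nth 0 s m :: drop m.+1 s.
Proof. by move=> hm; rewrite -drop_nth // cat_take_drop. Qed.

Lemma good_split a b x u y : good a b (x ++ u :: y) ->
  [/\ good a u x, good u.+1 b y, a <= u, u < b &
   (forall z, z \in x -> z < u) /\ (forall z, z \in y -> u < z)].
Proof.
rewrite /good pairwise_cat pairwise_cons all_cat /= => /andP[/and4P[hr hx hu hy]].
move=> /and3P[ax /andP[h1 h2] ay].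
have Hx : forall z, z \in x -> z < u.
  by move=> z zx; move/allrelP: hr => /(_ z u zx); apply; rewrite mem_head.
have Hy : forall z, z \in y -> u < z by move=> z zy; move/allP: hu => /(_ z zy).
split=> //.
- rewrite hx /=; apply/allP=> z zx; move/allP: ax => /(_ z zx) /andP[-> _]; exact: Hx.
- rewrite hy /=; apply/allP=> z zy; move/allP: ay => /(_ z zy) /andP[_ ->]; rewrite andbT; exact: Hy.
Qed.

Lemma build_ok f a b s : size s <= f -> good a b s ->
  is_strat a b (build f a b s) /\
  forall w, w \in Cset a b (build f a b s) =
    [&& a <= w, w <= b, (w == a) || (w.-1 \in s) & (w == b) || (w \in s)].
Proof.
elim: f a b s => [|f IH] a b s.
  rewrite leqn0 => /nilP -> _ /=; split=> // w; rewrite !in_nil !orbF; case: eqP => [->|ab]; rewrite ?in_cons ?in_nil ?orbF; lia.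
case: s => [|x0 s0] hs hg.
  simpl; split=> // w; rewrite !in_nil !orbF; case: eqP => [->|ab]; rewrite ?in_cons ?in_nil ?orbF; lia.
set s := x0 :: s0 in hs hg *.
rewrite [build _ _ _ _]/=.
set m := (size s)./2.
have hm : m < size s by rewrite /m /s /=; lia.
move: hg; rewrite [in good _ _ s](@split_s s m hm) => hg.
have [gx gy hau hub [Hx Hy]] := @good_split _ _ _ _ _ hg.
have [IHl1 IHl2] := IH a (nth 0 s m) (take m s) ltac:(rewrite size_take hm; rewrite /m /s /= in hs *; lia) gx.
have [IHr1 IHr2] := IH (nth 0 s m).+1 b (drop m.+1 s) ltac:(rewrite size_drop; rewrite /m /s /= in hs *; lia) gy.
split; first by rewrite /= hau hub IHl1 IHr1.
move=> w; rewrite /= mem_cat IHl2 IHr2.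
rewrite [in w.-1 \in s](@split_s s m hm) [in w \in s](@split_s s m hm) !mem_cat !in_cons.
set u := nth 0 s m in Hx Hy hau hub IHl2 IHr2 *.
set X := take m s in Hx Hy gx IHl2 *.
set Y := drop m.+1 s in Hx Hy gy IHr2 *.
case: (ltnP u w) => huw.
- have h1 : (w \in X) = false by apply/negP=> /Hx; lia.
  have h2 : (w.-1 \in X) = false by apply/negP=> /Hx; lia.
  rewrite h1 h2; case hy: (w \in Y); case hy2: (w.-1 \in Y); lia.
- have h1 : (w \in Y) = false by apply/negP=> /Hy; lia.
  have h2 : (w.-1 \in Y) = false by apply/negP=> /Hy; lia.
  rewrite h1 h2; case hy: (w \in X); case hy2: (w.-1 \in X); lia.
Qed.

Lemma build_height f a b s h : size s < 2 ^ h -> height (build f a b s) <= h.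
Proof.
elim: f a b s h => [|f IH] a b s h //=.
case: s => [|x0 s0] //= hs.
case: h hs => [|h] hs; first by rewrite expn0 in hs.
rewrite ltnS geq_max; rewrite expnS in hs.
set m := (size s0).+1./2.
apply/andP; split; apply: IH.
  rewrite size_take /=; case: ifP; rewrite /m /=; lia.
rewrite size_drop /= /m; lia.
Qed.
Lemma circ_mem n v l w : v < n -> l <= n -> (w \in circ n v l) =
  (w < n) && ((v <= w) && (w < v + l) || (w + n < v + l)).
Proof.
move=> hv hl; apply/mapP/idP.
  case=> i; rewrite mem_iota add0n => hi ->.
  case: (ltnP (v + i) n) => h.
    rewrite modn_small //; lia.
  have -> : v + i = (v + i - n) + n by lia.
  rewrite modnDr modn_small; lia.
move=> h.
case: (boolP ((v <= w) && (w < v + l))) => h2.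
  exists (w - v); first by rewrite mem_iota; lia.
  rewrite modn_small; lia.
exists (w + n - v); first by rewrite mem_iota; lia.
have -> : v + (w + n - v) = w + n by lia.
rewrite modnDr modn_small; lia.
Qed.

Lemma from_s n k s (P : nat -> bool) : good 0 n.-1 s -> size s < 2 ^ k ->
  (forall w, [&& 0 <= w, w <= n.-1, (w == 0) || (w.-1 \in s) & (w == n.-1) || (w \in s)] = P w) ->
  exists T : strat, in_Tk n k T /\ (forall w, w \in Cset 0 n.-1 T = P w).
Proof.
move=> hg hs hP; have [h1 h2] := @build_ok (size s) 0 n.-1 s (leqnn _) hg.
exists (build (size s) 0 n.-1 s); split.
  by rewrite /in_Tk h1 build_height.
by move=> w; rewrite h2 hP.
Qed.

Lemma good_iota a l b : a + l <= b -> good 0 b (iota a l).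
Proof.
move=> h; rewrite /good -sorted_pairwise; last exact: ltn_trans.
rewrite iota_ltn_sorted /=; apply/allP=> z; rewrite mem_iota; lia.
Qed.

Lemma good_cat b x y : good 0 b x -> good 0 b y ->
  (forall p q, p \in x -> q \in y -> p < q) -> good 0 b (x ++ y).
Proof.
rewrite /good pairwise_cat all_cat => /andP[-> ->] /andP[-> ->] h.
by rewrite !andbT; apply/allrelP => p q; apply: h.
Qed.

Theorem corollary3p1 (k n : nat) (hk : 2 <= k) (hn : 2 ^ k < n) (v : nat)
  (hv : v < n) (hv1 : v != 1) :
  let c := 2 ^ k - 2 in
  exists T : strat, in_Tk n k T /\
    (forall w : nat, w \in Cset 0 n.-1 T =
       if (0 \in circ n v c.+1) || (n.-1 \in circ n v c.+1)
       then w \in circ n v c.+1 else w \in circ n v c).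
Proof.
move=> c.
have hC : 4 <= 2 ^ k by rewrite -[4]/(2 ^ 2) leq_exp2l.
have hc : c = 2 ^ k - 2 by [].
move: c hc => c hc.
have H1 : c.+1 <= n by lia.
have H2 : c <= n by lia.
have cm : forall l w, l <= n -> (w \in circ n v l) =
  (w < n) && ((v <= w) && (w < v + l) || (w + n < v + l)) by move=> l w hl; apply: circ_mem.
rewrite !cm //.
case: (eqVneq v 0) => [v0|vn0].
  apply: (@from_s n k (iota 0 c.+1)).
  - apply: good_iota; lia.
  - rewrite size_iota; lia.
  - move=> w; rewrite !mem_iota !cm //; case: ifP; lia.
case: (leqP n.-1 (v + c)) => hvc.
  apply: (@from_s n k (iota 0 (v + c + 1 - n) ++ iota v.-1 (n - v))).
  - apply: good_cat; try (apply: good_iota; lia).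
    move=> p q; rewrite !mem_iota; lia.
  - rewrite size_cat !size_iota; lia.
  - move=> w; rewrite !mem_cat !mem_iota !cm //; case: ifP; lia.
apply: (@from_s n k (iota v.-1 c.+1)).
- apply: good_iota; lia.
- rewrite size_iota; lia.
- move=> w; rewrite !mem_iota !cm //; case: ifP; lia.
Qed.
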